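(* Let $1,2,3,4$ be four distinct vertices of $G$ such that $G[\{1,2,3\}]$ has edge set exactly $\{12,23\}$ and $G[\{2,3,4\}]$ has edge set exactly $\{23,34\}$ (nothing is assumed about whether $14$ is an edge). If $\Gamma_G$ is population monotonic, then $w_{23}\ge w_{12}+w_{34}$.
   Context: $G=(V,E;w)$ is a finite simple graph with edge weights $w:E\to\mathbb{R}$, $w_e>0$ for all $e\in E$; $w_{ij}$ denotes the weight of edge $ij$. The matching game on $G$ is the cooperative game $\Gamma_G=(N,\gamma)$ with player set $N=V$ and, for $S\subseteq N$, $\gamma(S)$ equal to the maximum weight of a matching in the induced subgraph $G[S]$ (so $\gamma(\emptyset)=0$). A population monotonic allocation scheme (PMAS) is a family $(\boldsymbol{x}_S)_{\emptyset\neq S\subseteq N}$ with $\boldsymbol{x}_S=(x_{S,i})_{i\in S}\in\mathbb{R}^S$ such that (efficiency) $\sum_{i\in S}x_{S,i}=\gamma(S)$ for every nonempty $S\subseteq N$, and (monotonicity) $x_{S,i}\le x_{T,i}$ whenever $\emptyset\ne S\subseteq T\subseteq N$ and $i\in S$. $\Gamma_G$ is called population monotonic if it admits a PMAS. *)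

(* Defs.v *)
From mathcomp Require Import all_boot all_order all_algebra.
Set Implicit Arguments. Unset Strict Implicit. Unset Printing Implicit Defensive.
Import Order.TTheory GRing.Theory Num.Theory.
Local Open Scope ring_scope.

Section Matching.
Variables (R : realFieldType) (T : finType) (e : rel T) (w : T -> T -> R).

Definition simple_graph := symmetric e /\ irreflexive e.
Definition pos_weights := (forall u v, w u v = w v u) /\ (forall u v, e u v -> 0 < w u v).

(* An edge is stored as an ordered pair (u,v) with enum_rank u < enum_rank v,
   so each undirected edge has exactly one representation. *)
Definition oriented_edge (p : T * T) : bool :=
  e p.1 p.2 && (enum_rank p.1 < enum_rank p.2)%N.

Definition is_matching (S : {set T}) (M : {set T * T}) : bool :=
  [forall p in M, oriented_edge p && (p.1 \in S) && (p.2 \in S)] &&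
  [forall p in M, forall q in M, (p != q) ==>
     [&& p.1 != q.1, p.1 != q.2, p.2 != q.1 & p.2 != q.2]].

Definition matching_weight (M : {set T * T}) : R := \sum_(p in M) w p.1 p.2.

Definition gamma (S : {set T}) : R :=
  \big[Order.max/0]_(M : {set T * T} | is_matching S M) matching_weight M.

(* population monotonic allocation scheme: x S i is x_{S,i} (only used for i in S) *)
Definition is_PMAS (x : {set T} -> T -> R) : Prop :=
  (forall S : {set T}, S != set0 -> \sum_(i in S) x S i = gamma S) /\
  (forall S U : {set T}, S != set0 -> S \subset U -> forall i, i \in S -> x S i <= x U i).

Definition population_monotonic : Prop := exists x, is_PMAS x.

End Matching.

(* Main.v *)
Require Import Defs.
From mathcomp Require Import all_boot all_order all_algebra.
From mathcomp Require Import ring lra.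
Set Warnings "-notation-overridden,-ambiguous-paths".
Import Order.TTheory GRing.Theory Num.Theory.
Local Open Scope ring_scope.

Set Implicit Arguments.
Section Aux.
Variables (R : realFieldType) (T : finType) (e : rel T) (w : T -> T -> R).

Lemma gamma_ge S M : is_matching e S M -> matching_weight w M <= gamma e w S.
Proof. by move=> HM; rewrite /gamma; apply: le_bigmax_cond. Qed.

Lemma gamma_pair a b : simple_graph e -> pos_weights e w -> e a b ->
  w a b <= gamma e w [set a; b].
Proof.
move=> [esym eirr] [wsym _] eab.
have ab : a != b by apply/eqP => E; rewrite E eirr in eab.
have rab : enum_rank a != enum_rank b by rewrite (inj_eq enum_rank_inj).
set p := if (enum_rank a < enum_rank b)%N then (a, b) else (b, a).
have Hp : oriented_edge e p && (p.1 \in [set a; b]) && (p.2 \in [set a; b]).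
  rewrite /p /oriented_edge; case: ltnP => h /=.
    by rewrite eab h !inE !eqxx ?orbT.
  rewrite esym eab !inE !eqxx ?orbT /= andbT ltn_neqAle h andbT eq_sym.
  by rewrite rab.
have wp : w p.1 p.2 = w a b by rewrite /p; case: ltnP => _ //=; rewrite wsym.
have HM : is_matching e [set a; b] [set p].
  apply/andP; split.
    by apply/forall_inP => q; rewrite inE => /eqP ->.
  apply/forall_inP => q; rewrite inE => /eqP ->.
  by apply/forall_inP => r; rewrite inE => /eqP ->; rewrite eqxx.
by have := @gamma_ge _ _ HM; rewrite /matching_weight big_set1 wp.
Qed.

Lemma gamma_path a b c : simple_graph e -> pos_weights e w ->
  e a b -> e b c -> ~~ e a c ->
  gamma e w [set a; b; c] <= Order.max (w a b) (w b c).
Proof.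
move=> [esym eirr] [wsym wpos] eab ebc nac.
have hmax : 0 <= Order.max (w a b) (w b c).
  by rewrite le_max (ltW (wpos _ _ eab)).
apply: bigmax_le => // M /andP [/forall_inP H1 /forall_inP H2].
have hb : forall p, p \in M -> (p.1 == b) || (p.2 == b).
  move=> [x y] /H1 /andP [/andP [/andP [ep _] i1] i2]; move: i1 i2; rewrite /= !inE.
  move=> /orP [/orP []|] /eqP ex /orP [/orP []|] /eqP ey; subst x y; rewrite ?eqxx ?orbT //.
  - by rewrite eirr in ep.
  - by rewrite ep in nac.
  - by rewrite esym ep in nac.
  - by rewrite eirr in ep.
case: (set_0Vmem M) => [->|[p pM]].
  by rewrite /matching_weight big_set0.
have EM : M = [set p].
  apply/setP => q; rewrite inE; apply/idP/eqP => [qM|->//]; apply/eqP.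
  apply/negPn/negP => npq.
  have := H2 q qM => /forall_inP /(_ p pM); rewrite npq /=.
  case/orP: (hb q qM) => /eqP ->; case/orP: (hb p pM) => /eqP ->;
    by rewrite eqxx ?andbF.
rewrite EM /matching_weight big_set1; clear EM.
move: pM => /H1 /andP [/andP [/andP [ep _] i1] i2]; move: ep i1 i2.
case: p => x y /= ep; rewrite !inE => /orP [/orP []|] /eqP ex /orP [/orP []|] /eqP ey; subst x y.
all: rewrite ?le_max ?lexx ?orbT // ?(wsym b a) ?(wsym c b) ?lexx ?orbT //.
- by rewrite eirr in ep.
- by rewrite ep in nac.
- by rewrite eirr in ep.
- by rewrite esym ep in nac.
- by rewrite eirr in ep.
Qed.
Lemma sum2 (F : T -> R) a b : a != b -> \sum_(i in [set a; b]) F i = F a + F b.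
Proof. by move=> ab; rewrite big_setU1 ?big_set1 // inE. Qed.

Lemma sum3 (F : T -> R) a b c : a != b -> a != c -> b != c ->
  \sum_(i in [set a; b; c]) F i = F a + F b + F c.
Proof.
move=> ab ac bc; rewrite setUC big_setU1.
  by rewrite sum2 //=; ring.
by rewrite !inE negb_or !(eq_sym c) ac bc.
Qed.

Lemma ne2 a b : [set a; b] != set0 :> {set T}.
Proof. by apply/set0Pn; exists a; rewrite !inE eqxx. Qed.
Lemma ne3 a b c : [set a; b; c] != set0 :> {set T}.
Proof. by apply/set0Pn; exists a; rewrite !inE eqxx. Qed.
Lemma sub12 (a b c : T) : [set a; b] \subset [set a; b; c].
Proof. by apply/subsetP => z; rewrite !inE; case/orP => ->; rewrite ?orbT. Qed.
Lemma sub23 (a b c : T) : [set b; c] \subset [set a; b; c].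
Proof. by apply/subsetP => z; rewrite !inE; case/orP => ->; rewrite ?orbT. Qed.

End Aux.

Theorem mainTheorem2 (R : realFieldType) (T : finType) (e : rel T) (w : T -> T -> R)
  (v1 v2 v3 v4 : T) :
  simple_graph e -> pos_weights e w ->
  uniq [:: v1; v2; v3; v4] ->
  e v1 v2 -> e v2 v3 -> ~~ e v1 v3 -> e v3 v4 -> ~~ e v2 v4 ->
  population_monotonic e w ->
  w v1 v2 + w v3 v4 <= w v2 v3.
Proof.
move=> G W U e12 e23 n13 e34 n24 [x [Heff Hmon]].
move: U; rewrite /= !inE !negb_or => /and4P [/and3P [d12 d13 d14] /andP [d23 d24] d34 _].
have [Gs Gi] := G; have [Ws Wp] := W.
have p12 := Wp _ _ e12; have p23 := Wp _ _ e23; have p34 := Wp _ _ e34.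
have s12 := Heff _ (@ne2 _ v1 v2); rewrite sum2 // in s12.
have s23 := Heff _ (@ne2 _ v2 v3); rewrite sum2 // in s23.
have s34 := Heff _ (@ne2 _ v3 v4); rewrite sum2 // in s34.
have s123 := Heff _ (@ne3 _ v1 v2 v3); rewrite sum3 // in s123.
have s234 := Heff _ (@ne3 _ v2 v3 v4); rewrite sum3 // in s234.
have g12 : w v1 v2 <= gamma e w [set v1; v2] by apply: gamma_pair.
have g23 : w v2 v3 <= gamma e w [set v2; v3] by apply: gamma_pair.
have g34 : w v3 v4 <= gamma e w [set v3; v4] by apply: gamma_pair.
have g123 : gamma e w [set v1; v2; v3] <= Order.max (w v1 v2) (w v2 v3) by apply: gamma_path.
have g234 : gamma e w [set v2; v3; v4] <= Order.max (w v2 v3) (w v3 v4) by apply: gamma_path.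
have m1 := Hmon _ _ (@ne2 _ v1 v2) (@sub12 _ v1 v2 v3) v1 ltac:(by rewrite !inE eqxx).
have m2 := Hmon _ _ (@ne2 _ v1 v2) (@sub12 _ v1 v2 v3) v2 ltac:(by rewrite !inE eqxx orbT).
have m3 := Hmon _ _ (@ne2 _ v2 v3) (@sub23 _ v1 v2 v3) v3 ltac:(by rewrite !inE eqxx orbT).
have m4 := Hmon _ _ (@ne2 _ v2 v3) (@sub12 _ v2 v3 v4) v2 ltac:(by rewrite !inE eqxx).
have m5 := Hmon _ _ (@ne2 _ v3 v4) (@sub23 _ v2 v3 v4) v3 ltac:(by rewrite !inE eqxx).
have m6 := Hmon _ _ (@ne2 _ v3 v4) (@sub23 _ v2 v3 v4) v4 ltac:(by rewrite !inE eqxx orbT).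
move: g123 g234; rewrite !maxEle; case: ifP => h1; case: ifP => h2; lra.
Qed.
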